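(* Let $f_A(x)=1-\dfrac{1}{\sum_{n\ge0}n!\,x^n}$ and $f_B(x)=\dfrac{\sum_{n\ge0}2^nn!\,x^n}{\sum_{n\ge0}n!\,x^n}$. Then $f_B(x)=\sum_{n\ge0}|\mathfrak B_n^{(0)}|x^n$, and for all $n,k\ge0$, $|\mathfrak B_n^{(k)}|$ equals the coefficient of $x^nt^k$ in $\dfrac{f_B(x)}{1-t\,f_A(x)}$.
   Context: $\mathfrak B_n$ is the group of signed permutations of $\{\pm1,\dots,\pm n\}$ ($w(-i)=-w(i)$), a Coxeter group with generators $\tau_0=(-1,1)$ and $\tau_i=(i,i+1)(-i,-i-1)$ for $1\le i\le n-1$ ($\mathfrak B_0$ is trivial). For $w\in\mathfrak B_n$, $C(w)$ is the set of generators not appearing in a (any) reduced expression of $w$; equivalently, with $w(0)=0$, $C(w)=\{\tau_i: |w(j)|<w(k)\ \forall\,0\le j\le i<k\le n\}$. $\mathfrak B_n^{(k)}=\{w\in\mathfrak B_n:|C(w)|=k\}$. *)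

(* Defs.v *)
From mathcomp Require Import all_boot all_order all_algebra all_fingroup.
Set Implicit Arguments. Unset Strict Implicit. Unset Printing Implicit Defensive.
Import Order.TTheory GRing.Theory Num.Theory.
Local Open Scope ring_scope.

(* A signed permutation w of {±1,…,±n} is encoded by a pair (s, e) with
   s : {perm 'I_n} and e : signs; w(i+1) = (-1)^(e i) * (s i + 1),
   w(-j) = -w(j).  This is a bijection onto B_n. *)
Definition SP (n : nat) : finType :=
  ({perm 'I_n} * {ffun 'I_n -> bool})%type.

(* w(j) as an integer, for 0 <= j <= n, with the convention w(0) = 0. *)
Definition wval (n : nat) (w : SP n) (j : nat) : int :=
  if j is j'.+1 then
    match (insub j' : option 'I_n) with
    | Some i => (if w.2 i then -1 else 1) * ((w.1 i : nat).+1)%:Z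
    | None => 0
    end
  else 0.

(* C(w) = { tau_i : |w(j)| < w(k) for all 0 <= j <= i < k <= n },
   tau_i indexed by i : 'I_n (i = 0..n-1). *)
Definition Cset (n : nat) (w : SP n) : {set 'I_n} :=
  [set i : 'I_n | [forall j : 'I_n.+1, forall k : 'I_n.+1,
     ((j <= i)%N && (i < k)%N) ==> (`|wval w j| < wval w k)]].

Definition Bk (n k : nat) : {set SP n} := [set w : SP n | #|Cset w| == k].

Definition ser := nat -> int.
Definition bser := nat -> nat -> int.

Definition smul (a b : ser) : ser :=
  fun n => \sum_(i < n.+1) a i * b (n - i)%N.
Definition sone : ser := fun n => (n == 0%N)%:R.

Definition bmul (a b : bser) : bser :=
  fun n k => \sum_(i < n.+1) \sum_(j < k.+1) a i j * b (n - i)%N (k - j)%N.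

Definition Efact : ser := fun n => (n`!)%:R.
Definition Dfact : ser := fun n => (2 ^ n * n`!)%:R.

Definition one_minus_t (f : ser) : bser :=
  fun n k => if k == 0%N then (n == 0%N)%:R else if k == 1%N then - f n else 0.
Definition embed (f : ser) : bser := fun n k => if k == 0%N then f n else 0.

(* Main.v *)
Require Import Defs.
From mathcomp Require Import all_boot all_order all_algebra all_fingroup.
From mathcomp Require Import zify.
Import Order.TTheory GRing.Theory Num.Theory.
Set Implicit Arguments. Unset Strict Implicit. Unset Printing Implicit Defensive.
Local Open Scope ring_scope.

Lemma wvalS n (w : SP n) (i : 'I_n) :
  wval w (val i).+1 = (if w.2 i then -1 else 1) * ((w.1 i : nat).+1)%:Z.
Proof. by rewrite /wval valK. Qed.

Lemma wvalS' n (w : SP n) (i : 'I_n) j : val i = j ->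
  wval w j.+1 = (if w.2 i then -1 else 1) * ((w.1 i : nat).+1)%:Z.
Proof. by move=> <-; rewrite wvalS. Qed.

Lemma wval_abs n (w : SP n) j : `|wval w j| <= n%:Z.
Proof.
case: j => [|j] //=; case: insubP => [i _ _|_] //.
by rewrite normrM; case: (w.2 i); rewrite ?normrN normr1 mul1r lez_nat ltn_ord.
Qed.

Definition cutb n (w : SP n) (t : nat) : bool :=
  [forall j : 'I_n.+1, forall k : 'I_n.+1,
     ((j <= t)%N && (t < k)%N) ==> (`|wval w j| < wval w k)].

Lemma cutbP n (w : SP n) t : reflect (forall j k : nat, (j <= t)%N -> (t < k)%N ->
   (k <= n)%N -> `|wval w j| < wval w k) (cutb w t).
Proof.
apply: (iffP forallP) => [h j k hj hk hkn | h j].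
  have hjn : (j < n.+1)%N by rewrite ltnS (leq_trans hj) // (leq_trans _ hkn) // ltnW.
  have hkn' : (k < n.+1)%N by [].
  by have /forallP/(_ (Ordinal hkn'))/implyP := h (Ordinal hjn); apply; rewrite /= hj hk.
apply/forallP => k; apply/implyP => /andP [hj hk]; apply: h => //.
by rewrite -ltnS ltn_ord.
Qed.

Lemma inCset n (w : SP n) (i : 'I_n) : (i \in Cset w) = cutb w i.
Proof. by rewrite inE. Qed.

Lemma cutb_n n (w : SP n) : cutb w n.
Proof. by apply/cutbP => j k _ hk hkn; move: (leq_trans hk hkn); rewrite ltnn. Qed.

Section Phi.
Variables m r : nat.

Definition phis (s : {perm 'I_m}) (sg : {perm 'I_r}) (p : 'I_(m + r)) : 'I_(m + r) :=
  match split p with inl a => lshift r (s a) | inr b => rshift m (sg b) end.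

Lemma phis_inj s sg : injective (phis s sg).
Proof.
move=> p q; rewrite /phis.
case: splitP => a pa; case: splitP => b qb /(congr1 val) /=.
- by move/val_inj/perm_inj => eab; apply/val_inj => /=; rewrite pa qb eab.
- by move=> e; have := ltn_ord (s a); rewrite e ltnNge leq_addr.
- by move=> e; have := ltn_ord (s b); rewrite -e ltnNge leq_addr.
- by move/addnI/val_inj/perm_inj => eab; apply/val_inj => /=; rewrite pa qb eab.
Qed.

Definition phi (x : SP m * {perm 'I_r}) : SP (m + r) :=
  (perm (@phis_inj x.1.1 x.2),
   [ffun p => match split p with inl a => x.1.2 a | inr _ => false end]).

Lemma wval_phi_lo x j : (j <= m)%N -> wval (phi x) j = wval x.1 j.
Proof.
case: j => [|j] // hj.
rewrite (@wvalS' _ _ (lshift r (Ordinal hj))) // (@wvalS' _ _ (Ordinal hj)) // /= permE ffunE /phis.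
case: splitP => [a /= ea|b /= eb].
  have -> : a = Ordinal hj by apply: val_inj.
  by [].
exfalso; have h' : (m + b < m)%N by rewrite -eb.
by rewrite ltnNge leq_addr in h'.
Qed.

Lemma wval_phi_hi x j : (m < j)%N -> (j <= m + r)%N -> m%:Z < wval (phi x) j.
Proof.
case: j => [|j] // hj hjr.
rewrite (@wvalS' _ _ (Ordinal hjr)) // /= permE ffunE /phis.
case: splitP => [a /= ea|b /= eb].
  by move: (ltn_ord a); rewrite -ea ltnNge -ltnS hj.
by rewrite mul1r ltz_nat ltnS leq_addr.
Qed.

Lemma cut_phi_lo x t : (t < m)%N -> cutb (phi x) t = cutb x.1 t.
Proof.
move=> ht; apply/cutbP/cutbP => h j k hj hk hkn.
  rewrite -!wval_phi_lo //; last by rewrite (leq_trans hj) // ltnW.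
  by apply: h => //; rewrite (leq_trans hkn) // leq_addr.
have hjm : (j <= m)%N by rewrite (leq_trans hj) // ltnW.
case: (leqP k m) => hkm.
  by rewrite !wval_phi_lo //; apply: h.
rewrite wval_phi_lo //; apply: le_lt_trans (wval_abs _ _) (wval_phi_hi _ hkm hkn).
Qed.

Lemma cut_phi_m x : cutb (phi x) m.
Proof.
apply/cutbP => j k hj hk hkn; rewrite wval_phi_lo //.
exact: le_lt_trans (wval_abs _ _) (wval_phi_hi _ hk hkn).
Qed.

Lemma phi_inj : injective phi.
Proof.
move=> [[s1 e1] g1] [[s2 e2] g2] /= [hs he].
have hs' p : phis s1 g1 p = phis s2 g2 p.
  by move: (congr1 (fun f : {perm _} => f p) hs); rewrite !permE.
have es : s1 = s2.
  apply/permP => a; have := hs' (lshift r a); rewrite /phis.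
  case: splitP => [a' /= ea|b /= eb]; last by move: (ltn_ord a); rewrite eb ltnNge leq_addr.
  have -> : a' = a by apply: val_inj.
  by move/lshift_inj.
have eg : g1 = g2.
  apply/permP => b; have := hs' (rshift m b); rewrite /phis.
  case: splitP => [a /= ea|b' /= eb]; first by move: (ltn_ord a); rewrite -ea ltnNge leq_addr.
  have -> : b' = b by apply: val_inj; apply/eqP; rewrite -(eqn_add2l m) eb.
  by move/rshift_inj.
have ee : e1 = e2.
  apply/ffunP => a; have := congr1 (fun f : {ffun _ -> bool} => f (lshift r a)) he.
  rewrite /= !ffunE; case: splitP => [a' /= ea|b /= eb]; last by move: (ltn_ord a); rewrite eb ltnNge leq_addr.
  by have -> : a' = a by apply: val_inj.
by rewrite es eg ee.
Qed.

Lemma pig k y (f : 'I_k -> nat) : injective f -> (forall a, (f a < y)%N) -> (k <= y)%N.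
Proof.
move=> fi hf; pose g a := Ordinal (hf a).
have gi : injective g by move=> a b /(congr1 val) /= /fi.
by have := leq_card g gi; rewrite !card_ord.
Qed.

Lemma phi_surj (w : SP (m + r)) : cutb w m -> exists x, w = phi x.
Proof.
case: w => s e /cutbP hc.
have hp : forall p : 'I_(m + r), (m <= p)%N -> ~~ e p && (m <= s p)%N.
  move=> p hmp.
  have h0 := hc 0%N p.+1 (leq0n _) hmp (ltn_ord p).
  rewrite wvalS /= normr0 in h0.
  have -> /= : e p = false by move: h0; case: (e p) => //; rewrite mulN1r oppr_gt0.
  apply: (@pig m _ (fun a => s (lshift r a))).
    by move=> a b /val_inj /perm_inj /lshift_inj.
  move=> a; have := hc (lshift r a).+1 p.+1 (ltn_ord a) hmp (ltn_ord p).
  rewrite !wvalS /= normrM; case: (e p) (e (lshift r a)) => [] [];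
    by rewrite ?mulN1r ?mul1r ?normrN ?normr1 ?oppr_gt0 ?ltz_nat ?mul1r ?ltrNz ?ltz_nat // ?ltNz_nat.
have hpe p hmp := proj1 (andP (hp p hmp)).
have hps p hmp := proj2 (andP (hp p hmp)).
have hsr b : (s (rshift m b) - m < r)%N.
  have := ltn_ord (s (rshift m b)); have := hps (rshift m b) (leq_addr _ _); lia.
pose fs (b : 'I_r) : 'I_r := Ordinal (hsr b).
have fsi : injective fs.
  move=> b1 b2 /(congr1 val) /= ee.
  have h1 := hps (rshift m b1) (leq_addr _ _); have h2 := hps (rshift m b2) (leq_addr _ _).
  have : s (rshift m b1) = s (rshift m b2).
    by apply: (@ord_inj (m + r)); move: ee h1 h2; lia.
  by move/perm_inj/rshift_inj.
pose sg := perm fsi.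
have hlo a : (s (lshift r a) < m)%N.
  rewrite ltnNge; apply/negP => ha.
  have hq : (s (lshift r a) - m < r)%N by have := ltn_ord (s (lshift r a)); lia.
  pose q : 'I_r := Ordinal hq.
  have := permKV sg q; rewrite permE => /(congr1 val) /= eq.
  have h1 := hps (rshift m ((sg^-1)%g q)) (leq_addr _ _).
  have : s (rshift m ((sg^-1)%g q)) = s (lshift r a).
    by apply: (@ord_inj (m + r)); move: eq h1 ha; lia.
  move/perm_inj/(congr1 val) => /=; have := ltn_ord a; lia.
pose fl (a : 'I_m) : 'I_m := Ordinal (hlo a).
have fli : injective fl.
  by move=> a1 a2 /(congr1 val) /= /ord_inj /perm_inj /lshift_inj.
exists ((perm fli, [ffun a => e (lshift r a)]), sg).
rewrite /phi /=; congr (_, _).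
  apply/permP => p; rewrite !permE /phis; apply: (@ord_inj (m + r)).
  case: splitP => [a /= ea|b /= eb].
    by rewrite permE /=; congr (nat_of_ord (s _)); apply: ord_inj.
  rewrite permE /=.
  have -> : p = rshift m b by apply: ord_inj.
  by have := hps (rshift m b) (leq_addr _ _); lia.
apply/ffunP => p; rewrite ffunE.
case: splitP => [a /= ea|b /= eb].
  by rewrite ffunE; congr (e _); apply: ord_inj.
by rewrite (negbTE (hpe p _)) // eb leq_addr.
Qed.
End Phi.

Definition cutn n (w : SP n) t := (t < n)%N && cutb w t.
Definition cnt n (w : SP n) m := (\sum_(t < m) cutn w t)%N.

Lemma card_C n (w : SP n) : #|Cset w| = cnt w n.
Proof.
rewrite /cnt -sum1_card big_mkcond /=; apply: eq_bigr => t _.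
by rewrite /cutn ltn_ord inCset; case: cutb.
Qed.

Lemma sum_bool_cards (T : finType) (P : pred T) :
  (\sum_(x : T) P x)%N = #|[set x | P x]|.
Proof. by rewrite -sum1_card [RHS]big_mkcond /=; apply: eq_bigr => x _; rewrite inE; case: (P x). Qed.

Lemma cnt_phi m r x : cnt (@phi m r x) m = #|Cset x.1|.
Proof.
rewrite card_C /cnt; apply: eq_bigr => t _.
by rewrite /cutn (cut_phi_lo _ (ltn_ord t)) ltn_ord (ltn_addr r (ltn_ord t)).
Qed.

Lemma core m r k : (#|Bk m k| * r`!)%N =
  (\sum_(w : SP (m + r)) (((m == m + r) || cutn w m) && (cnt w m == k)))%N.
Proof.
rewrite sum_bool_cards.
have -> : [set w : SP (m + r) | ((m == m + r) || cutn w m) && (cnt w m == k)] =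
   (@phi m r) @: [set x : SP m * {perm 'I_r} | x.1 \in Bk m k].
  apply/setP => w; rewrite inE; apply/idP/imsetP.
  - case/andP => h1 /eqP h2.
    have hc : cutb w m.
      case/orP: h1 => [/eqP e|/andP [] //].
      by rewrite [X in cutb w X]e; exact: cutb_n.
    have [x ex] := phi_surj hc.
    by exists x => //; rewrite inE /Bk inE -h2 ex cnt_phi.
  - case=> x; rewrite inE /Bk inE => /eqP hx ->.
    rewrite cnt_phi hx eqxx andbT.
    apply/orP; case: (posnP r) => [r0|rp].
      by left; apply/eqP; lia.
    by right; rewrite /cutn cut_phi_m andbT -{1}(addn0 m) ltn_add2l.
rewrite card_imset; last exact: phi_inj.
have -> : [set x : SP m * {perm 'I_r} | x.1 \in Bk m k] = setX (Bk m k) [set: {perm 'I_r}].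
  by apply/setP => -[a b]; rewrite !inE andbT.
by rewrite cardsX cardsT card_Sn.
Qed.

Lemma core' n m k : (m <= n)%N -> (#|Bk m k| * (n - m)`!)%N =
  (\sum_(w : SP n) (((m == n) || cutn w m) && (cnt w m == k)))%N.
Proof.
move=> hm; have [r er] : exists r, n = (m + r)%N by exists (n - m)%N; rewrite subnKC.
by subst n; rewrite addKn; exact: core.
Qed.

Lemma aux k s : ((k < s) + (s == k))%N = (k <= s)%N.
Proof. by case: ltngtP. Qed.

Lemma L1 (c : nat -> bool) k n :
  (\sum_(m < n) (c m && ((\sum_(t < m) c t)%N == k)))%N = (k < \sum_(t < n) c t)%N.
Proof.
elim: n => [|n IH]; first by rewrite !big_ord0.
rewrite !big_ord_recr /= IH.
case: (c n) => /=; last by rewrite addn0 addn0.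
by rewrite addn1 ltnS aux.
Qed.

Lemma L2 (c : nat -> bool) k n :
  (\sum_(m < n.+1) ((((m : nat) == n) || c m) && ((\sum_(t < m) c t)%N == k)))%N
   = (k <= \sum_(t < n) c t)%N.
Proof.
rewrite big_ord_recr /= eqxx /=.
rewrite (eq_bigr (fun m : 'I_n => (c m && ((\sum_(t < m) c t)%N == k) : nat))); last first.
  by move=> i _; rewrite /= (ltn_eqF (ltn_ord i)).
by rewrite L1 aux.
Qed.

Lemma I1 n k : (\sum_(m < n.+1) (#|Bk m k| * (n - m)`!))%N =
  (\sum_(w : SP n) (k <= #|Cset w|))%N.
Proof.
rewrite (eq_bigr (fun m : 'I_n.+1 => \sum_(w : SP n)
   ((((m : nat) == n) || cutn w m) && (cnt w m == k)))%N); last first.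
  by move=> m _; rewrite core' // -ltnS.
rewrite exchange_big /=; apply: eq_bigr => w _.
by rewrite card_C; exact: (L2 (cutn w)).
Qed.

Lemma I2 n k : (\sum_(m < n) (#|Bk m k| * (n - m)`!))%N =
  (\sum_(w : SP n) (k < #|Cset w|))%N.
Proof.
rewrite (eq_bigr (fun m : 'I_n => \sum_(w : SP n)
   ((cutn w m) && (cnt w m == k)))%N); last first.
  by move=> m _; rewrite core' ?(ltnW (ltn_ord m)) // (ltn_eqF (ltn_ord m)).
rewrite exchange_big /=; apply: eq_bigr => w _.
by rewrite card_C; exact: (L1 (cutn w)).
Qed.

Lemma card_SP n : #|SP n| = (2 ^ n * n`!)%N.
Proof. by rewrite card_prod card_ffun card_bool card_ord mulnC; congr (_ * _)%N; exact: card_Sn. Qed.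

Definition pz (N : nat) (a : ser) : {poly int} := \poly_(i < N) a i.

Lemma coef_pz N a i : (pz N a)`_i = if (i < N)%N then a i else 0.
Proof. by rewrite coef_poly. Qed.

Lemma smulE N a b n : (n < N)%N -> smul a b n = (pz N a * pz N b)`_n.
Proof.
move=> hn; rewrite coefM; apply: eq_bigr => i _.
by rewrite !coef_pz (leq_ltn_trans (leq_ord i) hn) (leq_ltn_trans (leq_subr i n) hn).
Qed.

Lemma coefM_congr N (p q r : {poly int}) n : (forall i, (i < N)%N -> p`_i = q`_i) ->
  (n < N)%N -> (p * r)`_n = (q * r)`_n.
Proof.
move=> h hn; rewrite !coefM; apply: eq_bigr => i _.
by rewrite h // (leq_ltn_trans (leq_ord i) hn).
Qed.

Lemma smulC a b n : smul a b n = smul b a n.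
Proof. by rewrite !(smulE _ _ (ltnSn n)) mulrC. Qed.

Lemma smulA a b c n : smul (smul a b) c n = smul a (smul b c) n.
Proof.
rewrite !(smulE _ _ (ltnSn n)).
rewrite (@coefM_congr n.+1 _ (pz n.+1 a * pz n.+1 b)) //; last first.
  by move=> i hi; rewrite coef_pz hi (smulE _ _ hi).
rewrite [in RHS]mulrC [in RHS](@coefM_congr n.+1 _ (pz n.+1 b * pz n.+1 c)) //; last first.
  by move=> i hi; rewrite coef_pz hi (smulE _ _ hi).
by rewrite -mulrA mulrC.
Qed.

Lemma smulBl a b c n : smul (fun i => a i - b i) c n = smul a c n - smul b c n.
Proof. by rewrite /smul -sumrB; apply: eq_bigr => i _; rewrite mulrBl. Qed.

Lemma smulBr a b c n : smul c (fun i => a i - b i) n = smul c a n - smul c b n.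
Proof. by rewrite /smul -sumrB; apply: eq_bigr => i _; rewrite mulrBr. Qed.

Lemma smul_extl a a' b n : (forall i, a i = a' i) -> smul a b n = smul a' b n.
Proof. by move=> h; apply: eq_bigr => i _; rewrite h. Qed.

Lemma smul_extr a b b' n : (forall i, b i = b' i) -> smul a b n = smul a b' n.
Proof. by move=> h; apply: eq_bigr => i _; rewrite h. Qed.

Lemma smul_sone a n : smul a sone n = a n.
Proof.
rewrite /smul big_ord_recr /= subnn /sone eqxx mulr1 big1 ?add0r // => i _.
by rewrite subn_eq0 leqNgt ltn_ord mulr0.
Qed.

Lemma smul_cancel a b : (forall n, smul a Efact n = smul b Efact n) -> forall n, a n = b n.
Proof.
move=> h n; elim/ltn_ind: n => n IH.
have := h n; rewrite /smul !big_ord_recr /= subnn /Efact fact0 mulr1.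
rewrite (eq_bigr (fun i : 'I_n => b i * ((n - i)`!)%:R)); last first.
  by move=> i _; rewrite IH.
by move/addrI; rewrite mulr1.
Qed.

Lemma bmul_omt (G : bser) f n k : bmul G (one_minus_t f) n k =
  G n k - (if k is k'.+1 then smul (fun i => G i k') f n else 0).
Proof.
have inner : forall i : 'I_n.+1, \sum_(j < k.+1) G i j * one_minus_t f (n - i)%N (k - j)%N
    = G i k * ((n - i)%N == 0%N)%:R - (if k is k'.+1 then G i k' * f (n - i)%N else 0).
  move=> i; rewrite big_ord_recr /= subnn /one_minus_t /=.
  case: k => [|k]; first by rewrite big_ord0 add0r subr0.
  rewrite big_ord_recr /= subSnn /= big1 ?add0r; first by rewrite mulrN addrC.
  move=> j _; have hj : (1 < k.+1 - j)%N by have := ltn_ord j; lia.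
  by rewrite (gtn_eqF (ltnW hj)) (gtn_eqF hj) mulr0.
rewrite /bmul (eq_bigr _ (fun i _ => inner i)) sumrB.
congr (_ - _).
  rewrite big_ord_recr /= subnn eqxx mulr1 big1 ?add0r // => i _.
  by rewrite subn_eq0 leqNgt ltn_ord mulr0.
by case: k {inner} => [|k]; [rewrite big1 | ].
Qed.

Lemma conv k n : smul (fun i => (#|Bk i k|)%:Z) Efact n =
  ((\sum_(m < n.+1) (#|Bk m k| * (n - m)`!))%N)%:Z.
Proof. by rewrite /smul /Efact -natz natr_sum; apply: eq_bigr => i _; rewrite natrM; congr (_ * _); rewrite natz. Qed.

Lemma Iprime n k : smul (fun i => (#|Bk i k|)%:Z) Efact n =
  if k is k'.+1 then smul (fun i => (#|Bk i k'|)%:Z) Efact n - (#|Bk n k'|)%:Z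
  else Dfact n.
Proof.
case: k => [|k]; rewrite conv I1.
  rewrite sum_bool_cards.
  have -> : [set x : SP n | (0 <= #|Cset x|)%N] = setT by apply/setP => x; rewrite !inE.
  by rewrite cardsT card_SP /Dfact natz.
rewrite -I2 conv big_ord_recr /= subnn fact0 muln1 PoszD.
by rewrite addrK.
Qed.

Unset Implicit Arguments.

Theorem mainTheorem15 (Einv : ser) (G : bser) :
  smul Efact Einv = sone ->
  let fA : ser := fun n => sone n - Einv n in
  let fB : ser := smul Dfact Einv in
  bmul G (one_minus_t fA) = embed fB ->
  (forall n : nat, fB n = (#|Bk n 0|)%:Z) /\
  (forall n k : nat, G n k = (#|Bk n k|)%:Z).
Proof.
move=> hE fA fB hG.
have hEi i : smul Einv Efact i = sone i by rewrite smulC hE.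
have Grec n k : G n k = if k is k'.+1 then smul (fun i => G i k') fA n else fB n.
  have := congr1 (fun F => F n k) hG; rewrite bmul_omt /embed.
  case: k => [|k] /= h; first by rewrite -h subr0.
  by apply/eqP; rewrite -subr_eq0 h.
have Nrec n k : (#|Bk n k|)%:Z =
    if k is k'.+1 then smul (fun i => (#|Bk i k'|)%:Z) fA n else fB n.
  move: n; apply: (@smul_cancel (fun n => (#|Bk n k|)%:Z)
     (fun n => if k is k'.+1 then smul (fun i => (#|Bk i k'|)%:Z) fA n else fB n)) => n.
  rewrite Iprime; case: k => [|k].
    rewrite smulA (smul_extr _ _ hEi) smul_sone.
    by [].
  rewrite smulA [in RHS](@smul_extr _ _ (fun i => Efact i - sone i)); last first.
    move=> i; rewrite /fA smulBl hEi; congr (_ - _).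
    by rewrite smulC smul_sone.
  by rewrite smulBr smul_sone.
have GN k n : G n k = (#|Bk n k|)%:Z.
  elim: k n => [|k IH] n; rewrite Grec Nrec //.
  by apply: smul_extl => i; rewrite IH.
split=> [n|n k]; last exact: GN.
by have := GN 0%N n; rewrite Grec.
Qed.
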